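(* Suppose $n$ is odd. Let $\ell$ be the smallest integer $\ge0$ such that $a_{\ell+1}\neq0$, and let $\lambda:=[\ell/2]$. Then the $(n+1)/2$ functions $J_1,\dots,J_\lambda,\ H,\ F_{\lambda+2},F_{\lambda+3},\dots,F_{(n-1)/2},\ C$ are pairwise in involution with respect to $\{\cdot,\cdot\}$ and functionally independent (their differentials are linearly independent on a dense open subset of $\mathbb R^n$). Hence they define a Liouville integrable system on $(\mathbb R^n,\{\cdot,\cdot\})$ (whose Poisson structure has rank $n-1$).
   Context: Let $n\ge1$, $(a_1,\dots,a_n)\in\mathbb R^n\setminus\{0\}$. On $\mathbb R^n$ with coordinates $x_1,\dots,x_n$ consider the Poisson bracket $\{x_i,x_j\}=x_ix_j$ for $1\le i<j\le n$ (extended by skew-symmetry and the Leibniz rule; rational functions are considered on the open dense set where their denominators do not vanish). Let $H=a_1x_1+\dots+a_nx_n$, $v_0:=0$ and $v_i:=a_1x_1+\dots+a_ix_i$ for $i=1,\dots,n$. For $k=1,\dots,[n/2]$ let $J_k:=\dfrac{x_1x_3\cdots x_{2k-1}}{x_2x_4\cdots x_{2k}}$. For $n$ odd and $k=1,\dots,(n+1)/2$ let $F_k:=v_{2k-1}\dfrac{x_{2k+1}x_{2k+3}\cdots x_n}{x_{2k}x_{2k+2}\cdots x_{n-1}}$ (empty product $=1$, so $F_{(n+1)/2}=H$), and let $C:=\dfrac{x_1x_3\cdots x_n}{x_2x_4\cdots x_{n-1}}$. *)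

(* Defs.v *)
From Stdlib Require Import Reals Lra Lia List.
Open Scope R_scope.

(* Points of R^n are x : nat -> R, with coordinates x 1, ..., x n
   (the values x 0, x (n+1), ... are irrelevant).  Likewise a : nat -> R
   encodes (a_1,...,a_n). *)

Fixpoint sumR (m : nat) (f : nat -> R) : R :=
  match m with
  | O => 0
  | S k => sumR k f + f (S k)
  end.

Fixpoint stepprod (x : nat -> R) (j k : nat) : R :=
  match k with
  | O => 1
  | S k' => x j * stepprod x (j + 2)%nat k'
  end.

Definition vfun (a : nat -> R) (i : nat) (x : nat -> R) : R :=
  sumR i (fun j => a j * x j).

Definition Hfun (n : nat) (a : nat -> R) : (nat -> R) -> R := vfun a n.

Definition Jfun (k : nat) (x : nat -> R) : R :=
  stepprod x 1 k / stepprod x 2 k.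

(* F_k = v_{2k-1} * x_{2k+1} x_{2k+3} ... x_n / (x_{2k} x_{2k+2} ... x_{n-1})
   (n odd; both products have (n-2k+1)/2 factors) *)
Definition Ffun (n : nat) (a : nat -> R) (k : nat) (x : nat -> R) : R :=
  vfun a (2 * k - 1) x *
  (stepprod x (2 * k + 1) ((n + 1 - 2 * k) / 2) /
   stepprod x (2 * k) ((n + 1 - 2 * k) / 2)).

Definition Cfun (n : nat) (x : nat -> R) : R :=
  stepprod x 1 ((n + 1) / 2) / stepprod x 2 ((n - 1) / 2).

Definition has_partial (f : (nat -> R) -> R) (x : nat -> R) (i : nat) (l : R) : Prop :=
  derivable_pt_lim (fun t => f (fun j => if Nat.eqb j i then t else x j)) (x i) l.

Definition grad_at (n : nat) (f : (nat -> R) -> R) (x : nat -> R) (g : nat -> R) : Prop :=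
  forall i, (1 <= i <= n)%nat -> has_partial f x i (g i).

(* {f,g}(x) = sum_{1<=i<j<=n} x_i x_j (d_i f d_j g - d_j f d_i g),
   i.e. the bracket determined by {x_i,x_j} = x_i x_j for i<j. *)
Definition poisson (n : nat) (x : nat -> R) (df dg : nat -> R) : R :=
  sumR n (fun j => sumR (j - 1) (fun i => x i * x j * (df i * dg j - df j * dg i))).

(* The open dense set where the denominators (even coordinates) do not vanish. *)
Definition domain (n : nat) (x : nat -> R) : Prop :=
  forall i, (1 <= i <= n)%nat -> Nat.even i = true -> x i <> 0.

Definition in_involution (n : nat) (f g : (nat -> R) -> R) : Prop :=
  forall x, domain n x ->
    exists df dg, grad_at n f x df /\ grad_at n g x dg /\ poisson n x df dg = 0.

Definition open_n (n : nat) (U : (nat -> R) -> Prop) : Prop :=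
  forall x, U x -> exists eps, eps > 0 /\
    forall y, (forall i, (1 <= i <= n)%nat -> Rabs (y i - x i) < eps) -> U y.

Definition dense_n (n : nat) (U : (nat -> R) -> Prop) : Prop :=
  forall x eps, eps > 0 ->
    exists y, U y /\ forall i, (1 <= i <= n)%nat -> Rabs (y i - x i) < eps.

Definition diffs_independent_at (n : nat) (fs : list ((nat -> R) -> R)) (x : nat -> R) : Prop :=
  exists grads : nat -> nat -> R,
    (forall m, (m < length fs)%nat -> grad_at n (nth m fs (fun _ => 0)) x (grads m)) /\
    forall c : nat -> R,
      (forall i, (1 <= i <= n)%nat ->
         fold_right Rplus 0 (map (fun m => c m * grads m i) (seq 0 (length fs))) = 0) ->
      forall m, (m < length fs)%nat -> c m = 0.

Definition functionally_independent (n : nat) (fs : list ((nat -> R) -> R)) : Prop :=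
  exists U, open_n n U /\ dense_n n U /\ forall x, U x -> diffs_independent_at n fs x.

Definition pfamily (n : nat) (a : nat -> R) (lam : nat) : list ((nat -> R) -> R) :=
  map Jfun (seq 1 lam) ++ (Hfun n a :: nil)
  ++ map (Ffun n a) (seq (lam + 2) ((n - 1) / 2 - (lam + 1)))
  ++ (Cfun n :: nil).

(* Main.v *)
Require Import Defs.
From Stdlib Require Import Reals Lra Lia List Bool FunctionalExtensionality ClassicalEpsilon.
Open Scope R_scope.

Lemma sumR_ext m f g : (forall i, (1 <= i <= m)%nat -> f i = g i) -> sumR m f = sumR m g.
Proof. induction m; intros H; simpl; auto. rewrite IHm. rewrite H; auto; lia. intros; apply H; lia. Qed.

Lemma sumR_lin m c1 c2 f g : sumR m (fun i => c1 * f i + c2 * g i) = c1 * sumR m f + c2 * sumR m g.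
Proof. induction m; simpl. ring. rewrite IHm. ring. Qed.

Lemma sumR_plus m f g : sumR m (fun i => f i + g i) = sumR m f + sumR m g.
Proof. induction m; simpl. ring. rewrite IHm. ring. Qed.

Lemma sumR_scal m c f : sumR m (fun i => c * f i) = c * sumR m f.
Proof. induction m; simpl. ring. rewrite IHm. ring. Qed.

Lemma sumR_zero m f : (forall i, (1 <= i <= m)%nat -> f i = 0) -> sumR m f = 0.
Proof. intros H. rewrite (sumR_ext m f (fun i => 0 * f i)). rewrite sumR_scal; ring.
intros; rewrite H; auto; ring. Qed.

Lemma sum_trunc m s q : (s <= m)%nat ->
  sumR m (fun t => (if (t <=? s)%nat then 1 else 0) * q t) = sumR s q.
Proof. induction m; intros H.
- replace s with 0%nat by lia. reflexivity.
- destruct (Nat.eq_dec s (S m)).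
  + subst. simpl. rewrite Nat.leb_refl. rewrite (sumR_ext m _ q). ring.
    intros i Hi. replace (i <=? S m)%nat with true. ring. symmetry; apply Nat.leb_le; lia.
  + cbn [sumR]. rewrite IHm by lia. replace (S m <=? s)%nat with false. ring.
    symmetry; apply Nat.leb_gt; lia.
Qed.

Definition omega (n : nat) (p q : nat -> R) : R :=
  sumR n (fun j => sumR (j - 1) (fun i => p i * q j - p j * q i)).

Lemma omega_K n p q : omega n p q =
  sumR n (fun t => (sumR (t - 1) p + sumR t p - sumR n p) * q t).
Proof.
  induction n.
  - reflexivity.
  - unfold omega in *. cbn [sumR]. rewrite IHn.
    replace (S n - 1)%nat with n by lia.
    transitivity (sumR n (fun t => 1 * ((sumR (t - 1) p + sumR t p - sumR n p) * q t) + (- p (S n)) * q t)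
      + (sumR n p + (sumR n p + p (S n)) - (sumR n p + p (S n))) * q (S n)).
    + rewrite sumR_lin.
      assert (E: sumR n (fun i : nat => p i * q (S n) - p (S n) * q i)
        = q (S n) * sumR n p + (- p (S n)) * sumR n q).
      { rewrite <- sumR_lin. apply sumR_ext; intros; ring. }
      rewrite E. ring.
    + f_equal. apply sumR_ext; intros. cbn [sumR]. ring.
Qed.

Lemma omega_antisym n p q : omega n p q = - omega n q p.
Proof. enough (omega n p q + omega n q p = 0) by lra. unfold omega.
rewrite <- sumR_plus. apply sumR_zero; intros. rewrite <- sumR_plus. apply sumR_zero; intros; ring. Qed.

Lemma omega_self n p : omega n p p = 0.
Proof. pose proof (omega_antisym n p p). lra. Qed.

Lemma omega_lin_l n c1 c2 p1 p2 q :
  omega n (fun i => c1 * p1 i + c2 * p2 i) q = c1 * omega n p1 q + c2 * omega n p2 q.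
Proof. unfold omega. rewrite <- sumR_lin. apply sumR_ext; intros.
rewrite <- sumR_lin. apply sumR_ext; intros; ring. Qed.

Lemma omega_lin_r n c1 c2 p q1 q2 :
  omega n p (fun i => c1 * q1 i + c2 * q2 i) = c1 * omega n p q1 + c2 * omega n p q2.
Proof. rewrite omega_antisym, omega_lin_l, (omega_antisym n p q1), (omega_antisym n p q2). ring. Qed.


Lemma omega_ext n p p' q q' :
  (forall i, (1 <= i <= n)%nat -> p i = p' i) ->
  (forall i, (1 <= i <= n)%nat -> q i = q' i) ->
  omega n p q = omega n p' q'.
Proof. intros Hp Hq. unfold omega. apply sumR_ext; intros j Hj. apply sumR_ext; intros i Hi.
rewrite !Hp, !Hq by lia. reflexivity. Qed.

Fixpoint oddR (s : nat) : R := match s with O => 0 | S s' => 1 - oddR s' end.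
Definition sg (i : nat) : R := 2 * oddR i - 1.

Lemma oddR_even k : oddR (2 * k) = 0.
Proof. induction k. reflexivity. replace (2 * S k)%nat with (S (S (2 * k))) by lia.
change (oddR (S (S (2 * k)))) with (1 - (1 - oddR (2 * k))). rewrite IHk. ring. Qed.
Lemma oddR_odd k : oddR (2 * k + 1) = 1.
Proof. replace (2 * k + 1)%nat with (S (2 * k)) by lia. change (oddR (S (2 * k))) with (1 - oddR (2 * k)). rewrite oddR_even. ring. Qed.
Lemma oddR_01 s : oddR s = 0 \/ oddR s = 1.
Proof. induction s; simpl; lra. Qed.
Lemma oddR_pair t : (1 <= t)%nat -> oddR (t - 1) + oddR t = 1.
Proof. intros. destruct t. lia. replace (S t - 1)%nat with t by lia. change (oddR (S t)) with (1 - oddR t). ring. Qed.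

Definition alt (p q i : nat) : R := if ((p <=? i) && (i <=? q))%nat then sg i else 0.

Lemma Pre_alt p q s : (1 <= p)%nat -> (p <= q + 1)%nat ->
  sumR s (alt p q) = oddR (Nat.min s q) - oddR (Nat.min s (p - 1)).
Proof.
  intros H1 H2. induction s.
  - simpl. ring.
  - cbn [sumR]. rewrite IHs. unfold alt, sg.
    destruct (Nat.leb_spec (S s) q); destruct (Nat.leb_spec (S s) (p - 1)).
    + rewrite (Nat.min_l (S s) q), (Nat.min_l s q), (Nat.min_l (S s) (p-1)), (Nat.min_l s (p-1)) by lia.
      replace ((p <=? S s)%nat) with false by (symmetry; apply Nat.leb_gt; lia). simpl. ring.
    + rewrite (Nat.min_l (S s) q), (Nat.min_l s q), (Nat.min_r (S s) (p-1)), (Nat.min_r s (p-1)) by lia.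
      replace ((p <=? S s)%nat) with true by (symmetry; apply Nat.leb_le; lia).
      replace ((S s <=? q)%nat) with true by (symmetry; apply Nat.leb_le; lia). simpl. ring.
    + lia.
    + rewrite (Nat.min_r (S s) q), (Nat.min_r s q), (Nat.min_r (S s) (p-1)), (Nat.min_r s (p-1)) by lia.
      replace ((S s <=? q)%nat) with false by (symmetry; apply Nat.leb_gt; lia).
      rewrite andb_false_r. ring.
Qed.

Lemma min_pair t q : (1 <= t)%nat ->
  oddR (Nat.min (t - 1) q) + oddR (Nat.min t q) = if (t <=? q)%nat then 1 else 2 * oddR q.
Proof. intros. destruct (Nat.leb_spec t q).
- rewrite Nat.min_l, Nat.min_l by lia. apply oddR_pair; auto.
- rewrite Nat.min_r, Nat.min_r by lia. ring. Qed.

Lemma Kcoef_alt n p q t : (1 <= p)%nat -> (p <= q + 1)%nat -> (q <= n)%nat -> (1 <= t)%nat ->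
  sumR (t - 1) (alt p q) + sumR t (alt p q) - sumR n (alt p q) =
  (if (t <=? q)%nat then 1 else 2 * oddR q) - (if (t <=? p - 1)%nat then 1 else 2 * oddR (p - 1))
  - oddR q + oddR (p - 1).
Proof. intros. rewrite !Pre_alt by lia. rewrite <- min_pair, <- min_pair by lia.
rewrite (Nat.min_r n q) by lia. rewrite (Nat.min_r n (p - 1)) by lia. ring. Qed.

Lemma omega_J n k r : (1 <= k)%nat -> (2 * k <= n)%nat ->
  omega n (alt 1 (2 * k)) r = sumR (2 * k) r.
Proof. intros. rewrite omega_K. rewrite <- (sum_trunc n (2 * k) r) by lia.
apply sumR_ext; intros t Ht. rewrite Kcoef_alt by lia.
replace (1 - 1)%nat with 0%nat by lia. replace ((t <=? 0)%nat) with false by (symmetry; apply Nat.leb_gt; lia).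
rewrite oddR_even. simpl oddR. destruct (t <=? 2 * k)%nat; ring. Qed.

Lemma omega_C N r : omega (2 * N + 1) (alt 1 (2 * N + 1)) r = 0.
Proof. rewrite omega_K. apply sumR_zero; intros t Ht. rewrite Kcoef_alt by lia.
replace (1 - 1)%nat with 0%nat by lia. replace ((t <=? 0)%nat) with false by (symmetry; apply Nat.leb_gt; lia).
replace ((t <=? 2 * N + 1)%nat) with true by (symmetry; apply Nat.leb_le; lia).
rewrite oddR_odd. simpl oddR. ring. Qed.

Lemma omega_M N m r : (1 <= m)%nat -> (2 * m <= 2 * N + 1)%nat ->
  omega (2 * N + 1) (alt (2 * m) (2 * N + 1)) r = - (sumR (2 * N + 1) r - sumR (2 * m - 1) r).
Proof. intros. rewrite omega_K.
transitivity (sumR (2 * N + 1) (fun t => (-1) * r t + 1 * ((if (t <=? 2 * m - 1)%nat then 1 else 0) * r t))).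
2: { rewrite sumR_lin, sum_trunc by lia. ring. }
apply sumR_ext; intros t Ht. rewrite Kcoef_alt by lia.
replace ((t <=? 2 * N + 1)%nat) with true by (symmetry; apply Nat.leb_le; lia).
replace (2 * m - 1)%nat with (2 * (m - 1) + 1)%nat by lia.
rewrite !oddR_odd. destruct (t <=? 2 * (m - 1) + 1)%nat; ring. Qed.

Definition trunc (a x : nat -> R) (p i : nat) : R := if (i <=? p)%nat then a i * x i else 0.

Lemma vfun_S a s x : vfun a (S s) x = vfun a s x + a (S s) * x (S s).
Proof. reflexivity. Qed.

Lemma Pre_trunc a x p s : sumR s (trunc a x p) = vfun a (Nat.min s p) x.
Proof. induction s.
- reflexivity.
- cbn [sumR]. rewrite IHs. unfold trunc. destruct (Nat.leb_spec (S s) p).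
  + rewrite (Nat.min_l (S s) p), (Nat.min_l s p) by lia. rewrite vfun_S. ring.
  + rewrite (Nat.min_r (S s) p), (Nat.min_r s p) by lia. ring.
Qed.

Lemma telesc a x p q :
  sumR q (fun t => (vfun a (Nat.min (t - 1) p) x + vfun a (Nat.min t p) x - vfun a p x) * (a t * x t))
  = if (q <=? p)%nat then vfun a q x * vfun a q x - vfun a p x * vfun a q x
    else vfun a p x * (vfun a q x - vfun a p x).
Proof. induction q.
- simpl. change (vfun a 0 x) with 0. ring.
- cbn [sumR]. rewrite IHq. replace (S q - 1)%nat with q by lia. rewrite vfun_S.
  destruct (Nat.leb_spec (S q) p).
  + replace (q <=? p)%nat with true by (symmetry; apply Nat.leb_le; lia).
    rewrite (Nat.min_l q p), (Nat.min_l (S q) p) by lia. rewrite vfun_S. ring.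
  + destruct (Nat.leb_spec q p).
    * replace q with p by lia. rewrite (Nat.min_l p p), (Nat.min_r (S p) p) by lia. ring.
    * rewrite (Nat.min_r q p), (Nat.min_r (S q) p) by lia. ring.
Qed.

Lemma omega_T n a x p q : (p <= q)%nat -> (q <= n)%nat ->
  omega n (trunc a x p) (trunc a x q) = vfun a p x * (vfun a q x - vfun a p x).
Proof. intros. rewrite omega_K.
transitivity (sumR n (fun t => (if (t <=? q)%nat then 1 else 0) *
   ((vfun a (Nat.min (t - 1) p) x + vfun a (Nat.min t p) x - vfun a p x) * (a t * x t)))).
- apply sumR_ext; intros t Ht. rewrite !Pre_trunc. rewrite (Nat.min_r n p) by lia.
  unfold trunc. destruct (t <=? q)%nat; ring.
- rewrite sum_trunc by lia. rewrite telesc. destruct (Nat.leb_spec q p).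
  + replace q with p by lia. ring.
  + ring.
Qed.

Definition upd (x : nat -> R) (i : nat) (t : R) : nat -> R :=
  fun j => if Nat.eqb j i then t else x j.

Lemma upd_same x i : upd x i (x i) = x.
Proof. extensionality j. unfold upd. destruct (Nat.eqb_spec j i); subst; auto. Qed.

Lemma PDext f g x l : (forall t, f t = g t) -> derivable_pt_lim f x l -> derivable_pt_lim g x l.
Proof. intros H. replace g with f; auto. extensionality t; auto. Qed.
Lemma PDplus f g x lf lg : derivable_pt_lim f x lf -> derivable_pt_lim g x lg ->
  derivable_pt_lim (fun t => f t + g t) x (lf + lg).
Proof. intros. exact (derivable_pt_lim_plus f g x lf lg H H0). Qed.
Lemma PDmult f g x lf lg : derivable_pt_lim f x lf -> derivable_pt_lim g x lg ->
  derivable_pt_lim (fun t => f t * g t) x (lf * g x + f x * lg).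
Proof. intros. exact (derivable_pt_lim_mult f g x lf lg H H0). Qed.
Lemma PDdiv f g x lf lg : derivable_pt_lim f x lf -> derivable_pt_lim g x lg -> g x <> 0 ->
  derivable_pt_lim (fun t => f t / g t) x ((lf * g x - lg * f x) / (g x * g x)).
Proof. intros. pose proof (derivable_pt_lim_div f g x lf lg H H0 H1). unfold Rsqr in H2. exact H2. Qed.
Lemma PDconst c x : derivable_pt_lim (fun _ => c) x 0.
Proof. exact (derivable_pt_lim_const c x). Qed.
Lemma PDid x : derivable_pt_lim (fun t => t) x 1.
Proof. exact (derivable_pt_lim_id x). Qed.
Lemma PDleq f x l l' : l = l' -> derivable_pt_lim f x l -> derivable_pt_lim f x l'.
Proof. intros ->; auto. Qed.

Lemma PDcoord x i j : derivable_pt_lim (fun t => upd x i t j) (x i) (if Nat.eqb j i then 1 else 0).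
Proof. unfold upd. destruct (Nat.eqb j i). apply PDid. apply PDconst. Qed.

Lemma Dvfun a x i s : (1 <= i)%nat ->
  derivable_pt_lim (fun t => vfun a s (upd x i t)) (x i) (if (i <=? s)%nat then a i else 0).
Proof. intros Hi. induction s.
- apply (PDext (fun _ => 0)). reflexivity.
  replace (if (i <=? 0)%nat then a i else 0) with 0. apply PDconst.
  replace (i <=? 0)%nat with false by (symmetry; apply Nat.leb_gt; lia). auto.
- apply (PDext (fun t => vfun a s (upd x i t) + a (S s) * upd x i t (S s))). reflexivity.
  eapply PDleq. 2: { apply PDplus. apply IHs. apply (PDmult (fun _ => a (S s))). apply PDconst. apply PDcoord. }
  destruct (Nat.eqb_spec (S s) i).
  + subst. rewrite Nat.leb_refl. replace (S s <=? s)%nat with false by (symmetry; apply Nat.leb_gt; lia). ring.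
  + destruct (Nat.leb_spec i s).
    * replace (i <=? S s)%nat with true by (symmetry; apply Nat.leb_le; lia). ring.
    * replace (i <=? S s)%nat with false by (symmetry; apply Nat.leb_gt; lia). ring.
Qed.

Fixpoint indf (j k i : nat) : R :=
  match k with O => 0 | S k' => (if Nat.eqb i j then 1 else 0) + indf (j + 2) k' i end.

Lemma Dstep x i k : forall j, exists d,
  derivable_pt_lim (fun t => stepprod (upd x i t) j k) (x i) d /\
  x i * d = indf j k i * stepprod x j k.
Proof. induction k; intros j.
- exists 0. split. apply (PDext (fun _ => 1)). reflexivity. apply PDconst. simpl. ring.
- destruct (IHk (j + 2)%nat) as [d [Hd Hx]].
  eexists. split.
  + apply (PDext (fun t => upd x i t j * stepprod (upd x i t) (j + 2) k)). reflexivity.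
    apply PDmult. apply PDcoord. apply Hd.
  + cbv beta. rewrite upd_same. simpl stepprod. simpl indf.
    transitivity ((if Nat.eqb j i then 1 else 0) * x i * stepprod x (j + 2) k + x j * (x i * d)).
    * ring.
    * rewrite Hx. rewrite Nat.eqb_sym. destruct (Nat.eqb_spec i j). subst. ring. ring.
Qed.

Lemma stepprod_nz x j k : (forall r, (r < k)%nat -> x (j + 2 * r)%nat <> 0) -> stepprod x j k <> 0.
Proof. revert j. induction k; intros j H; simpl. lra.
apply Rmult_integral_contrapositive. split.
- specialize (H 0%nat). replace (j + 2 * 0)%nat with j in H by lia. apply H; lia.
- apply IHk. intros r Hr. replace (j + 2 + 2 * r)%nat with (j + 2 * S r)%nat by lia. apply H; lia.
Qed.

Lemma Dquot x i j1 k1 j2 k2 : stepprod x j2 k2 <> 0 -> exists d,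
  derivable_pt_lim (fun t => stepprod (upd x i t) j1 k1 / stepprod (upd x i t) j2 k2) (x i) d /\
  x i * d = (indf j1 k1 i - indf j2 k2 i) * (stepprod x j1 k1 / stepprod x j2 k2).
Proof. intros Hnz. destruct (Dstep x i k1 j1) as [d1 [H1 E1]]. destruct (Dstep x i k2 j2) as [d2 [H2 E2]].
eexists. split. apply PDdiv. apply H1. apply H2. rewrite upd_same; auto.
cbv beta. rewrite !upd_same. field_simplify; auto.
replace (x i * d1 * stepprod x j2 k2) with ((x i * d1) * stepprod x j2 k2) by ring.
replace (x i * d2 * stepprod x j1 k1) with ((x i * d2) * stepprod x j1 k1) by ring.
rewrite E1, E2. field. auto. Qed.

Lemma sg_SS p : sg (S (S p)) = sg p.
Proof. unfold sg. simpl oddR. ring. Qed.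
Lemma sg_S p : sg (S p) = - sg p.
Proof. unfold sg. simpl oddR. ring. Qed.
Lemma sg_sq p : sg p * sg p = 1.
Proof. unfold sg. destruct (oddR_01 p) as [-> | ->]; ring. Qed.

Lemma ind_diff k : forall p i, (1 <= p)%nat ->
  indf p k i - indf (S p) k i = sg p * alt p (p + 2 * k - 1) i.
Proof. induction k; intros p i Hp.
- cbn [indf]. unfold alt. replace (p + 2 * 0 - 1)%nat with (p - 1)%nat by lia.
  destruct (Nat.leb_spec p i). replace (i <=? p - 1)%nat with false by (symmetry; apply Nat.leb_gt; lia).
  rewrite andb_false_r. ring. replace (p <=? i)%nat with false by (symmetry; apply Nat.leb_gt; lia). simpl. ring.
- simpl indf. replace (S p + 2)%nat with (S (p + 2)) by lia.
  transitivity ((if (i =? p)%nat then 1 else 0) - (if (i =? S p)%nat then 1 else 0) +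
     (indf (p + 2) k i - indf (S (p + 2)) k i)). ring.
  rewrite IHk by lia. replace (p + 2)%nat with (S (S p)) by lia. rewrite sg_SS.
  unfold alt. replace (S (S p) + 2 * k - 1)%nat with (p + 2 * S k - 1)%nat by lia.
  destruct (Nat.eqb_spec i p).
  + subst i. replace (S (S p) <=? p)%nat with false by (symmetry; apply Nat.leb_gt; lia).
    rewrite Nat.leb_refl. replace (p <=? p + 2 * S k - 1)%nat with true by (symmetry; apply Nat.leb_le; lia).
    replace (p =? S p)%nat with false by (symmetry; apply Nat.eqb_neq; lia). simpl.
    rewrite sg_sq. ring.
  + destruct (Nat.eqb_spec i (S p)).
    * subst i. replace (S (S p) <=? S p)%nat with false by (symmetry; apply Nat.leb_gt; lia).
      replace (p <=? S p)%nat with true by (symmetry; apply Nat.leb_le; lia).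
      replace (S p <=? p + 2 * S k - 1)%nat with true by (symmetry; apply Nat.leb_le; lia).
      simpl. rewrite sg_S. pose proof (sg_sq p). lra.
    * destruct (Nat.leb_spec p i).
      -- replace (S (S p) <=? i)%nat with true by (symmetry; apply Nat.leb_le; lia). simpl. ring.
      -- replace (S (S p) <=? i)%nat with false by (symmetry; apply Nat.leb_gt; lia). simpl. ring.
Qed.

Lemma indf_last k : forall j i, indf j (S k) i = indf j k i + (if (i =? j + 2 * k)%nat then 1 else 0).
Proof. induction k; intros j i.
- simpl. replace (j + 0)%nat with j by lia. ring.
- change (indf j (S (S k)) i) with ((if Nat.eqb i j then 1 else 0) + indf (j + 2) (S k) i).
  rewrite IHk. simpl indf. replace (j + 2 + 2 * k)%nat with (j + 2 * S k)%nat by lia. ring.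
Qed.

Lemma grad_choice n f x (D : nat -> R) :
  (forall i, (1 <= i <= n)%nat -> exists d, has_partial f x i d /\ x i * d = D i) ->
  exists g, grad_at n f x g /\ forall i, (1 <= i <= n)%nat -> x i * g i = D i.
Proof. intros H.
  destruct (choice (fun i d => (1 <= i <= n)%nat -> has_partial f x i d /\ x i * d = D i)) as [g Hg].
  - intros i. destruct (Compare_dec.le_lt_dec 1 i); destruct (Compare_dec.le_lt_dec i n).
    + destruct (H i) as [d Hd]. lia. exists d; auto.
    + exists 0. lia.
    + exists 0. lia.
    + exists 0. lia.
  - exists g. split. intros i Hi. apply Hg; auto. intros i Hi. apply Hg; auto.
Qed.

Lemma div2_eq a b : a = (2 * b)%nat -> (a / 2)%nat = b.
Proof. intros ->. rewrite Nat.mul_comm. apply Nat.div_mul. lia. Qed.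

Definition Mv (N : nat) (x : nat -> R) (m : nat) : R :=
  stepprod x (2 * m + 1) (N + 1 - m) / stepprod x (2 * m) (N + 1 - m).
Definition DJ (x : nat -> R) (k i : nat) : R := Jfun k x * alt 1 (2 * k) i.
Definition DH (N : nat) (a x : nat -> R) (i : nat) : R := trunc a x (2 * N + 1) i.
Definition DF (N : nat) (a x : nat -> R) (m i : nat) : R :=
  Mv N x m * trunc a x (2 * m - 1) i + vfun a (2 * m - 1) x * Mv N x m * alt (2 * m) (2 * N + 1) i.
Definition DC (N : nat) (x : nat -> R) (i : nat) : R := Cfun (2 * N + 1) x * alt 1 (2 * N + 1) i.

Lemma domain_even n x c : domain n x -> (1 <= 2 * c <= n)%nat -> x (2 * c)%nat <> 0.
Proof. intros H Hc. apply H; auto. apply Nat.even_even. Qed.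

Lemma sg1 : sg 1 = 1. Proof. unfold sg. simpl. ring. Qed.
Lemma sg_even c : sg (2 * c) = -1. Proof. unfold sg. rewrite oddR_even. ring. Qed.

Lemma trunc_dv a x i s : x i * (if (i <=? s)%nat then a i else 0) = trunc a x s i.
Proof. unfold trunc. destruct (i <=? s)%nat; ring. Qed.

Lemma grad_J N x k : domain (2 * N + 1) x -> (2 * k <= 2 * N + 1)%nat ->
  exists g, grad_at (2 * N + 1) (Jfun k) x g /\
    forall i, (1 <= i <= 2 * N + 1)%nat -> x i * g i = DJ x k i.
Proof. intros Hd Hk. apply grad_choice. intros i Hi.
  assert (Hnz : stepprod x 2 k <> 0).
  { apply stepprod_nz. intros r Hr. replace (2 + 2 * r)%nat with (2 * (1 + r))%nat by lia.
    apply (domain_even (2 * N + 1)); auto; lia. }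
  destruct (Dquot x i 1 k 2 k Hnz) as [d [H E]]. exists d. split.
  - exact H.
  - rewrite E. unfold DJ, Jfun. rewrite (ind_diff k 1 i) by lia. rewrite sg1.
    replace (1 + 2 * k - 1)%nat with (2 * k)%nat by lia. ring.
Qed.

Lemma grad_H N a x : exists g, grad_at (2 * N + 1) (Hfun (2 * N + 1) a) x g /\
    forall i, (1 <= i <= 2 * N + 1)%nat -> x i * g i = DH N a x i.
Proof. apply grad_choice. intros i Hi. eexists. split.
  - apply (Dvfun a x i (2 * N + 1)). lia.
  - unfold DH. apply trunc_dv.
Qed.

Lemma grad_F N a x m : domain (2 * N + 1) x -> (1 <= m <= N)%nat ->
  exists g, grad_at (2 * N + 1) (Ffun (2 * N + 1) a m) x g /\
    forall i, (1 <= i <= 2 * N + 1)%nat -> x i * g i = DF N a x m i.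
Proof. intros Hd Hm. apply grad_choice. intros i Hi.
  assert (HL : ((2 * N + 1 + 1 - 2 * m) / 2)%nat = (N + 1 - m)%nat) by (apply div2_eq; lia).
  assert (Hnz : stepprod x (2 * m) (N + 1 - m) <> 0).
  { apply stepprod_nz. intros r Hr. replace (2 * m + 2 * r)%nat with (2 * (m + r))%nat by lia.
    apply (domain_even (2 * N + 1)); auto; lia. }
  destruct (Dquot x i (2 * m + 1) (N + 1 - m) (2 * m) (N + 1 - m) Hnz) as [d [H E]].
  pose proof (Dvfun a x i (2 * m - 1) ltac:(lia)) as Hv.
  eexists. split.
  - unfold has_partial. unfold Ffun. rewrite HL. exact (PDmult _ _ _ _ _ Hv H).
  - cbv beta. rewrite !upd_same.
    replace (x i * ((if (i <=? 2 * m - 1)%nat then a i else 0) *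
       (stepprod x (2 * m + 1) (N + 1 - m) / stepprod x (2 * m) (N + 1 - m)) + vfun a (2 * m - 1) x * d))
     with ((x i * (if (i <=? 2 * m - 1)%nat then a i else 0)) *
       (stepprod x (2 * m + 1) (N + 1 - m) / stepprod x (2 * m) (N + 1 - m)) + vfun a (2 * m - 1) x * (x i * d)) by ring.
    rewrite E, trunc_dv. unfold DF, Mv.
    replace (indf (2 * m + 1) (N + 1 - m) i - indf (2 * m) (N + 1 - m) i)
      with (- (indf (2 * m) (N + 1 - m) i - indf (S (2 * m)) (N + 1 - m) i)) by (replace (S (2 * m)) with (2 * m + 1)%nat by lia; ring).
    rewrite ind_diff by lia. rewrite sg_even.
    replace (2 * m + 2 * (N + 1 - m) - 1)%nat with (2 * N + 1)%nat by lia. ring.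
Qed.

Lemma grad_C N x : domain (2 * N + 1) x ->
  exists g, grad_at (2 * N + 1) (Cfun (2 * N + 1)) x g /\
    forall i, (1 <= i <= 2 * N + 1)%nat -> x i * g i = DC N x i.
Proof. intros Hd. apply grad_choice. intros i Hi.
  assert (H1 : ((2 * N + 1 + 1) / 2)%nat = (N + 1)%nat) by (apply div2_eq; lia).
  assert (H2 : ((2 * N + 1 - 1) / 2)%nat = N) by (apply div2_eq; lia).
  assert (Hnz : stepprod x 2 N <> 0).
  { apply stepprod_nz. intros r Hr. replace (2 + 2 * r)%nat with (2 * (1 + r))%nat by lia.
    apply (domain_even (2 * N + 1)); auto; lia. }
  destruct (Dquot x i 1 (N + 1) 2 N Hnz) as [d [H E]].
  exists d. split.
  - unfold has_partial, Cfun. rewrite H1, H2. exact H.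
  - rewrite E. unfold DC, Cfun. rewrite H1, H2.
    replace (indf 1 (N + 1) i - indf 2 N i) with (indf 1 (N + 1) i - indf 2 (N + 1) i).
    2: { rewrite Nat.add_1_r, (indf_last N 2 i). replace (i =? 2 + 2 * N)%nat with false by (symmetry; apply Nat.eqb_neq; lia). ring. }
    rewrite ind_diff by lia. rewrite sg1. unfold alt.
    replace (i <=? 1 + 2 * (N + 1) - 1)%nat with true by (symmetry; apply Nat.leb_le; lia).
    replace (i <=? 2 * N + 1)%nat with true by (symmetry; apply Nat.leb_le; lia). ring.
Qed.

Lemma omega_scal_l n c p q : omega n (fun i => c * p i) q = c * omega n p q.
Proof. rewrite (omega_ext n (fun i => c * p i) (fun i => c * p i + 0 * p i) q q).
rewrite omega_lin_l. ring. intros; ring. auto. Qed.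
Lemma omega_scal_r n c p q : omega n p (fun i => c * q i) = c * omega n p q.
Proof. rewrite omega_antisym, omega_scal_l, (omega_antisym n p q). ring. Qed.

Lemma oddR_oddm k : (1 <= k)%nat -> oddR (2 * k - 1) = 1.
Proof. intros. replace (2 * k - 1)%nat with (2 * (k - 1) + 1)%nat by lia. apply oddR_odd. Qed.

Lemma omega_C_l N p : omega (2 * N + 1) p (fun i => DC N p i * 0 + DC N p i) = omega (2*N+1) p (fun i => DC N p i).
Proof. apply omega_ext; intros; auto; ring. Qed.

Lemma bracket_C N p x : omega (2 * N + 1) p (DC N x) = 0.
Proof. unfold DC. rewrite omega_scal_r, omega_antisym, omega_C. ring. Qed.

Lemma Pre_A k s : sumR s (alt 1 (2 * k)) = oddR (Nat.min s (2 * k)).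
Proof. rewrite Pre_alt by lia. replace (1 - 1)%nat with 0%nat by lia. rewrite Nat.min_0_r. simpl. ring. Qed.

Section Br.
Variables (N : nat) (a x : nat -> R) (lam : nat).
Hypothesis Hz : forall s, (s <= 2 * lam)%nat -> vfun a s x = 0.
Hypothesis HlamN : (lam + 1 <= N)%nat.

Lemma bracket_JJ k1 k2 : (1 <= k1 <= k2)%nat -> (k2 <= lam)%nat ->
  omega (2 * N + 1) (DJ x k1) (DJ x k2) = 0.
Proof. intros. unfold DJ. rewrite omega_scal_l, omega_scal_r, omega_J by lia.
rewrite Pre_A, Nat.min_l by lia. rewrite oddR_even. ring. Qed.

Lemma bracket_JH k : (1 <= k <= lam)%nat -> omega (2 * N + 1) (DJ x k) (DH N a x) = 0.
Proof. intros. unfold DJ, DH. rewrite omega_scal_l, omega_J by lia.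
rewrite Pre_trunc, Nat.min_l by lia. rewrite Hz by lia. ring. Qed.

Lemma bracket_JF k m : (1 <= k <= lam)%nat -> (lam + 2 <= m <= N)%nat ->
  omega (2 * N + 1) (DJ x k) (DF N a x m) = 0.
Proof. intros. unfold DJ, DF. rewrite omega_scal_l, omega_lin_r, !omega_J by lia.
rewrite Pre_trunc, Pre_alt by lia. rewrite !Nat.min_l by lia. rewrite Hz by lia. ring. Qed.

Lemma bracket_HF m : (1 <= m <= N)%nat ->
  omega (2 * N + 1) (DH N a x) (DF N a x m) = 0.
Proof. intros. unfold DF, DH. rewrite omega_lin_r.
rewrite (omega_antisym _ _ (trunc a x (2 * m - 1))), omega_T by lia.
rewrite (omega_antisym _ _ (alt (2 * m) (2 * N + 1))), omega_M by lia.
rewrite !Pre_trunc. rewrite Nat.min_l, Nat.min_l by lia. ring. Qed.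

Lemma bracket_FF m1 m2 : (1 <= m1 <= m2)%nat -> (m2 <= N)%nat ->
  omega (2 * N + 1) (DF N a x m1) (DF N a x m2) = 0.
Proof. intros. unfold DF. rewrite omega_lin_l, !omega_lin_r.
rewrite omega_T by lia.
rewrite (omega_antisym _ (trunc a x (2 * m1 - 1))), omega_M by lia.
rewrite !omega_M by lia.
rewrite !Pre_trunc, !Pre_alt by lia.
rewrite (Nat.min_r (2 * N + 1) (2 * m1 - 1)), (Nat.min_r (2 * m2 - 1) (2 * m1 - 1)),
  (Nat.min_r (2 * N + 1) (2 * m2 - 1)), (Nat.min_l (2 * m1 - 1) (2 * m2 - 1)) by lia.
rewrite ?Nat.min_id. replace (2 * m2 - 1)%nat with (2 * m2 - 1)%nat by lia. rewrite (Nat.min_l (2 * m1 - 1) (2 * N + 1)) by lia. rewrite oddR_odd, !oddR_oddm by lia. ring. Qed.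
End Br.

Definition fam (N : nat) (a : nat -> R) (lam m : nat) : (nat -> R) -> R :=
  if (m <? lam)%nat then Jfun (m + 1) else if (m =? lam)%nat then Hfun (2 * N + 1) a
  else if (m <? N)%nat then Ffun (2 * N + 1) a (m + 1) else Cfun (2 * N + 1).

Definition Dv (N : nat) (a : nat -> R) (lam : nat) (x : nat -> R) (m : nat) : nat -> R :=
  if (m <? lam)%nat then DJ x (m + 1) else if (m =? lam)%nat then DH N a x
  else if (m <? N)%nat then DF N a x (m + 1) else DC N x.

Lemma pfamily_len N a lam : (lam + 1 <= N)%nat -> length (pfamily (2 * N + 1) a lam) = (N + 1)%nat.
Proof. intros. unfold pfamily.
replace ((2 * N + 1 - 1) / 2)%nat with N by (symmetry; apply div2_eq; lia).
rewrite !length_app, !length_map, !length_seq. simpl. lia. Qed.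

Lemma pfamily_nth N a lam m : (lam + 1 <= N)%nat -> (m <= N)%nat ->
  nth m (pfamily (2 * N + 1) a lam) (fun _ => 0) = fam N a lam m.
Proof. intros H Hm. unfold pfamily, fam.
replace ((2 * N + 1 - 1) / 2)%nat with N by (symmetry; apply div2_eq; lia).
destruct (Nat.ltb_spec m lam).
- rewrite app_nth1 by (rewrite length_map, length_seq; lia).
  rewrite (nth_indep _ _ (Jfun 0)) by (rewrite length_map, length_seq; lia).
  rewrite map_nth, seq_nth by lia. f_equal; lia.
- rewrite app_nth2 by (rewrite length_map, length_seq; lia). rewrite length_map, length_seq.
  destruct (Nat.eqb_spec m lam).
  + subst. rewrite Nat.sub_diag. reflexivity.
  + replace (m - lam)%nat with (S (m - lam - 1)) by lia. simpl nth.
    destruct (Nat.ltb_spec m N).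
    * rewrite app_nth1 by (rewrite length_map, length_seq; lia).
      rewrite (nth_indep _ _ (Ffun (2 * N + 1) a 0)) by (rewrite length_map, length_seq; lia).
      rewrite map_nth, seq_nth by lia. f_equal; lia.
    * rewrite app_nth2 by (rewrite length_map, length_seq; lia). rewrite length_map, length_seq.
      replace (m - lam - 1 - (N - (lam + 1)))%nat with 0%nat by lia. reflexivity.
Qed.

Lemma poisson_omega n x df dg :
  poisson n x df dg = omega n (fun i => x i * df i) (fun i => x i * dg i).
Proof. unfold poisson, omega. apply sumR_ext; intros. apply sumR_ext; intros. ring. Qed.

Lemma grad_fam N a lam x m : domain (2 * N + 1) x -> (lam + 1 <= N)%nat -> (m <= N)%nat ->
  exists g, grad_at (2 * N + 1) (fam N a lam m) x g /\
    forall i, (1 <= i <= 2 * N + 1)%nat -> x i * g i = Dv N a lam x m i.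
Proof. intros Hd H Hm. unfold fam, Dv.
destruct (Nat.ltb_spec m lam). apply grad_J; auto; lia.
destruct (Nat.eqb_spec m lam). apply grad_H.
destruct (Nat.ltb_spec m N). apply grad_F; auto; lia.
apply grad_C; auto. Qed.

Lemma bracket_le N a lam x m1 m2 : (forall s, (s <= 2 * lam)%nat -> vfun a s x = 0) ->
  (lam + 1 <= N)%nat -> (m1 <= m2 <= N)%nat ->
  omega (2 * N + 1) (Dv N a lam x m1) (Dv N a lam x m2) = 0.
Proof. intros Hz H Hm. unfold Dv.
destruct (Nat.ltb_spec m2 lam).
- replace (m1 <? lam)%nat with true by (symmetry; apply Nat.ltb_lt; lia). apply (bracket_JJ N x lam H); lia.
- destruct (Nat.eqb_spec m2 lam).
  + destruct (Nat.ltb_spec m1 lam). apply (bracket_JH N a x lam Hz H); lia.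
    replace (m1 =? lam)%nat with true by (symmetry; apply Nat.eqb_eq; lia). apply omega_self.
  + destruct (Nat.ltb_spec m2 N).
    * destruct (Nat.ltb_spec m1 lam). apply (bracket_JF N a x lam Hz H); lia.
      destruct (Nat.eqb_spec m1 lam). apply (bracket_HF N a x lam H); lia.
      replace (m1 <? N)%nat with true by (symmetry; apply Nat.ltb_lt; lia). apply (bracket_FF N a x lam H); lia.
    * apply bracket_C.
Qed.

Lemma bracket_all N a lam x m1 m2 : (forall s, (s <= 2 * lam)%nat -> vfun a s x = 0) ->
  (lam + 1 <= N)%nat -> (m1 <= N)%nat -> (m2 <= N)%nat ->
  omega (2 * N + 1) (Dv N a lam x m1) (Dv N a lam x m2) = 0.
Proof. intros. destruct (Nat.le_ge_cases m1 m2).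
apply bracket_le; auto; lia. rewrite omega_antisym, (bracket_le N a lam x m2 m1); auto; try lia. ring. Qed.

Lemma involution N a lam : (forall x s, (s <= 2 * lam)%nat -> vfun a s x = 0) ->
  (lam + 1 <= N)%nat ->
  forall f g, In f (pfamily (2 * N + 1) a lam) -> In g (pfamily (2 * N + 1) a lam) ->
  in_involution (2 * N + 1) f g.
Proof. intros Hz H f g Hf Hg x Hx.
apply (In_nth _ _ (fun _ => 0)) in Hf. destruct Hf as [m1 [Hm1 E1]].
apply (In_nth _ _ (fun _ => 0)) in Hg. destruct Hg as [m2 [Hm2 E2]].
rewrite pfamily_len in Hm1, Hm2 by auto.
rewrite pfamily_nth in E1, E2 by (auto; lia). subst f g.
destruct (grad_fam N a lam x m1) as [g1 [G1 R1]]; auto; try lia.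
destruct (grad_fam N a lam x m2) as [g2 [G2 R2]]; auto; try lia.
exists g1, g2. split; auto. split; auto.
rewrite poisson_omega. rewrite (omega_ext _ _ (Dv N a lam x m1) _ (Dv N a lam x m2)) by auto.
apply bracket_all; auto; lia. Qed.

Definition lin (n : nat) (c x : nat -> R) : R := sumR n (fun i => c i * x i).
Definition Uset (n : nat) (cs : list (nat -> R)) (x : nat -> R) : Prop :=
  forall c, In c cs -> lin n c x <> 0.

Lemma sum_abs_le m f g : (forall i, (1 <= i <= m)%nat -> Rabs (f i) <= g i) -> Rabs (sumR m f) <= sumR m g.
Proof. induction m; intros H; simpl. rewrite Rabs_R0; lra.
eapply Rle_trans. apply Rabs_triang. apply Rplus_le_compat. apply IHm; intros; apply H; lia. apply H; lia. Qed.

Lemma sum_nonneg m f : (forall i, (1 <= i <= m)%nat -> 0 <= f i) -> 0 <= sumR m f.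
Proof. induction m; intros H; simpl. lra. assert (0 <= f (S m)) by (apply H; lia). assert (0 <= sumR m f) by (apply IHm; intros; apply H; lia). lra. Qed.

Lemma term_le_sum m f i : (forall j, (1 <= j <= m)%nat -> 0 <= f j) -> (1 <= i <= m)%nat -> f i <= sumR m f.
Proof. induction m; intros H Hi. lia. simpl. destruct (Nat.eq_dec i (S m)).
- subst. assert (0 <= sumR m f) by (apply sum_nonneg; intros; apply H; lia). lra.
- assert (f i <= sumR m f) by (apply IHm; intros; try apply H; lia). assert (0 <= f (S m)) by (apply H; lia). lra. Qed.

Lemma sum_le_mono s n f : (forall j, (1 <= j <= n)%nat -> 0 <= f j) -> (s <= n)%nat -> sumR s f <= sumR n f.
Proof. induction n; intros H Hs. replace s with 0%nat by lia. lra.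
destruct (Nat.eq_dec s (S n)). subst; lra. simpl. assert (sumR s f <= sumR n f) by (apply IHn; intros; try apply H; lia).
assert (0 <= f (S n)) by (apply H; lia). lra. Qed.

Lemma open_U n cs : open_n n (Uset n cs).
Proof. induction cs; intros x Hx.
- exists 1. split. lra. intros y _ c Hc. destruct Hc.
- assert (Hx' : Uset n cs x) by (intros c Hc; apply Hx; right; auto).
  destruct (IHcs x Hx') as [e1 [He1 H1]].
  set (S := sumR n (fun i => Rabs (a i))).
  assert (HS : 0 <= S) by (apply sum_nonneg; intros; apply Rabs_pos).
  assert (Ha : lin n a x <> 0) by (apply Hx; left; auto).
  set (e2 := Rabs (lin n a x) / (S + 1)).
  assert (He2 : 0 < e2) by (unfold e2; apply Rdiv_lt_0_compat; [apply Rabs_pos_lt; auto | lra]).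
  exists (Rmin e1 e2). split. apply Rmin_pos; lra.
  intros y Hy c Hc. destruct Hc as [<- | Hc].
  + intro Hz.
    assert (E : lin n a y - lin n a x = sumR n (fun i => a i * (y i - x i))).
    { unfold lin. rewrite <- (Rmult_1_l (sumR n (fun i => a i * y i))).
      rewrite <- (Rmult_1_l (sumR n (fun i => a i * x i))).
      replace (1 * sumR n (fun i : nat => a i * y i) - 1 * sumR n (fun i : nat => a i * x i))
        with (1 * sumR n (fun i : nat => a i * y i) + (-1) * sumR n (fun i : nat => a i * x i)) by ring.
      rewrite <- sumR_lin. apply sumR_ext; intros; ring. }
    assert (B : Rabs (sumR n (fun i => a i * (y i - x i))) <= sumR n (fun i => e2 * Rabs (a i))).
    { apply sum_abs_le. intros i Hi. rewrite Rabs_mult.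
      pose proof (Hy i Hi). pose proof (Rmin_r e1 e2). pose proof (Rabs_pos (a i)).
      rewrite Rmult_comm. apply Rmult_le_compat_r; lra. }
    rewrite sumR_scal in B. fold S in B. rewrite <- E, Hz in B.
    replace (0 - lin n a x) with (- lin n a x) in B by ring. rewrite Rabs_Ropp in B.
    unfold e2 in B. assert (Rabs (lin n a x) > 0) by (apply Rabs_pos_lt; auto).
    assert (Rabs (lin n a x) / (S + 1) * S < Rabs (lin n a x)).
    { apply (Rmult_lt_reg_r (S + 1)). lra. field_simplify; lra. }
    lra.
  + apply H1; auto. intros i Hi. pose proof (Hy i Hi). pose proof (Rmin_l e1 e2). lra.
Qed.

Lemma avoid bs : forall lo hi, lo < hi -> exists s, lo < s < hi /\ ~ In s bs.
Proof. induction bs as [|b bs IH]; intros lo hi H.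
- exists ((lo + hi) / 2). split. lra. intros [].
- destruct (IH lo hi H) as [s [Hs Hn]]. destruct (Req_dec s b).
  + destruct (IH lo s ltac:(lra)) as [s' [Hs' Hn']]. exists s'. split. lra.
    intros [E | E]; [lra | auto].
  + exists s. split; auto. intros [E | E]; [lra | auto].
Qed.

Lemma dense_U n cs e : (forall c, In c cs -> lin n c e <> 0) -> dense_n n (Uset n cs).
Proof. intros He x eps Heps.
  set (B := 1 + sumR n (fun i => Rabs (e i))).
  assert (HB : 1 <= B) by (unfold B; pose proof (sum_nonneg n (fun i => Rabs (e i)) ltac:(intros; apply Rabs_pos)); lra).
  destruct (avoid (map (fun c => - lin n c x / lin n c e) cs) 0 (eps / B)) as [s [Hs Hn]].
  { apply Rdiv_lt_0_compat; lra. }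
  exists (fun i => x i + s * e i). split.
  - intros c Hc Hz. apply Hn. apply in_map_iff. exists c. split; auto.
    assert (E : lin n c (fun i => x i + s * e i) = lin n c x + s * lin n c e).
    { unfold lin. rewrite <- (Rmult_1_l (sumR n (fun i => c i * x i))). rewrite <- sumR_lin. apply sumR_ext; intros; ring. }
    rewrite E in Hz. pose proof (He c Hc). replace (- lin n c x) with (s * lin n c e) by lra. field. auto.
  - intros i Hi. replace (x i + s * e i - x i) with (s * e i) by ring. rewrite Rabs_mult.
    rewrite (Rabs_right s) by lra.
    assert (Rabs (e i) <= sumR n (fun i => Rabs (e i))) by (apply (term_le_sum n (fun i => Rabs (e i))); auto; intros; apply Rabs_pos).
    assert (s * B < eps). { apply (Rmult_lt_reg_r (/ B)). apply Rinv_0_lt_compat; lra.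
      field_simplify; try lra. }
    assert (s * Rabs (e i) <= s * (B - 1)) by (apply Rmult_le_compat_l; unfold B; lra). nra.
Qed.

Definition lsum (L : nat) (f : nat -> R) : R := fold_right Rplus 0 (map f (seq 0 L)).

Lemma fold_plus_app l1 l2 : fold_right Rplus 0 (l1 ++ l2) = fold_right Rplus 0 l1 + fold_right Rplus 0 l2.
Proof. induction l1; simpl. ring. rewrite IHl1. ring. Qed.

Lemma lsum_S L f : lsum (S L) f = lsum L f + f L.
Proof. unfold lsum. rewrite seq_S, map_app, fold_plus_app. simpl. ring. Qed.

Lemma lsum_ext L f g : (forall m, (m < L)%nat -> f m = g m) -> lsum L f = lsum L g.
Proof. induction L; intros H. reflexivity. rewrite !lsum_S. rewrite IHL, H; auto. Qed.

Lemma lsum_scal L c f : c * lsum L f = lsum L (fun m => c * f m).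
Proof. induction L. unfold lsum; simpl; ring. rewrite !lsum_S, <- IHL. ring. Qed.

Lemma lsum_zero L f : (forall m, (m < L)%nat -> f m = 0) -> lsum L f = 0.
Proof. induction L; intros H. reflexivity. rewrite lsum_S, IHL, H; auto. ring. Qed.

Lemma lsum_single L f m0 : lsum L f = 0 -> (m0 < L)%nat ->
  (forall m, (m < L)%nat -> m <> m0 -> f m = 0) -> f m0 = 0.
Proof. induction L; intros H Hm Ho. lia. rewrite lsum_S in H.
destruct (Nat.eq_dec m0 L).
- subst. rewrite lsum_zero in H. lra. intros; apply Ho; lia.
- apply IHL; auto; try lia. rewrite (Ho L) in H; auto. lra. Qed.

Lemma sum_lsum_swap s L F : sumR s (fun i => lsum L (fun m => F m i)) = lsum L (fun m => sumR s (F m)).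
Proof. induction L.
- unfold lsum; simpl. apply sumR_zero; auto.
- rewrite lsum_S. rewrite <- IHL. rewrite <- sumR_plus. apply sumR_ext; intros. rewrite lsum_S. ring. Qed.

Lemma PJ x k s : sumR s (DJ x k) = Jfun k x * oddR (Nat.min s (2 * k)).
Proof. unfold DJ. rewrite sumR_scal, Pre_A. ring. Qed.
Lemma PH N a x s : sumR s (DH N a x) = vfun a (Nat.min s (2 * N + 1)) x.
Proof. unfold DH. apply Pre_trunc. Qed.
Lemma PF N a x m s : (1 <= m <= N)%nat -> sumR s (DF N a x m) =
  Mv N x m * vfun a (Nat.min s (2 * m - 1)) x +
  vfun a (2 * m - 1) x * Mv N x m * (oddR (Nat.min s (2 * N + 1)) - oddR (Nat.min s (2 * m - 1))).
Proof. intros. unfold DF. rewrite sumR_lin, Pre_trunc, Pre_alt by lia.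
replace (2 * m - 1)%nat with (2 * m - 1)%nat by lia. ring. Qed.
Lemma PC N x s : sumR s (DC N x) = Cfun (2 * N + 1) x * oddR (Nat.min s (2 * N + 1)).
Proof. unfold DC. rewrite sumR_scal, Pre_alt by lia. replace (1 - 1)%nat with 0%nat by lia.
rewrite Nat.min_0_r. simpl. ring. Qed.

Lemma Dv_J N a lam x m : (m < lam)%nat -> Dv N a lam x m = DJ x (m + 1).
Proof. intros. unfold Dv. replace (m <? lam)%nat with true by (symmetry; apply Nat.ltb_lt; lia). auto. Qed.
Lemma Dv_H N a lam x : Dv N a lam x lam = DH N a x.
Proof. unfold Dv. rewrite Nat.ltb_irrefl, Nat.eqb_refl. auto. Qed.
Lemma Dv_F N a lam x m : (lam < m < N)%nat -> Dv N a lam x m = DF N a x (m + 1).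
Proof. intros. unfold Dv. replace (m <? lam)%nat with false by (symmetry; apply Nat.ltb_ge; lia).
replace (m =? lam)%nat with false by (symmetry; apply Nat.eqb_neq; lia).
replace (m <? N)%nat with true by (symmetry; apply Nat.ltb_lt; lia). auto. Qed.
Lemma Dv_C N a lam x : (lam < N)%nat -> Dv N a lam x N = DC N x.
Proof. intros. unfold Dv. replace (N <? lam)%nat with false by (symmetry; apply Nat.ltb_ge; lia).
replace (N =? lam)%nat with false by (symmetry; apply Nat.eqb_neq; lia).
rewrite Nat.ltb_irrefl. auto. Qed.

Section Indep.
Variables (N : nat) (a x : nat -> R) (lam : nat) (c : nat -> R).
Hypothesis Hlam : (lam + 1 <= N)%nat.
Hypothesis Hx : forall i, (1 <= i <= 2 * N + 1)%nat -> x i <> 0.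
Hypothesis Hv : forall t, (lam + 1 <= t <= N)%nat -> vfun a (2 * t) x <> 0.
Hypothesis Key : forall s, (s <= 2 * N + 1)%nat ->
  lsum (N + 1) (fun m => c m * sumR s (Dv N a lam x m)) = 0.

Lemma sp_nz j k : (1 <= j)%nat -> (j + 2 * k <= 2 * N + 3)%nat -> stepprod x j k <> 0.
Proof. intros. apply stepprod_nz. intros r Hr. apply Hx. lia. Qed.

Lemma J_nz k : (1 <= k)%nat -> (2 * k <= 2 * N + 1)%nat -> Jfun k x <> 0.
Proof. intros. unfold Jfun. apply Rmult_integral_contrapositive. split.
apply sp_nz; lia. apply Rinv_neq_0_compat. apply sp_nz; lia. Qed.
Lemma M_nz m : (1 <= m <= N)%nat -> Mv N x m <> 0.
Proof. intros. unfold Mv. apply Rmult_integral_contrapositive. split.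
apply sp_nz; lia. apply Rinv_neq_0_compat. apply sp_nz; lia. Qed.
Lemma C_nz : Cfun (2 * N + 1) x <> 0.
Proof. unfold Cfun.
replace ((2 * N + 1 + 1) / 2)%nat with (N + 1)%nat by (symmetry; apply div2_eq; lia).
replace ((2 * N + 1 - 1) / 2)%nat with N by (symmetry; apply div2_eq; lia).
apply Rmult_integral_contrapositive. split.
apply sp_nz; lia. apply Rinv_neq_0_compat. apply sp_nz; lia. Qed.

Lemma step1 : c lam = 0.
Proof. assert (H := lsum_single _ _ lam (Key (2 * N) ltac:(lia)) ltac:(lia)).
  cbv beta in H. rewrite Dv_H in H.
  rewrite PH, Nat.min_l in H by lia.
  assert (c lam * vfun a (2 * N) x = 0).
  { apply H. intros m Hm Hne. unfold Dv.
    destruct (Nat.ltb_spec m lam).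
    - rewrite PJ, Nat.min_r by lia. rewrite oddR_even. ring.
    - destruct (Nat.eqb_spec m lam). lia. destruct (Nat.ltb_spec m N).
      + rewrite PF by lia. rewrite (Nat.min_r (2 * N) (2 * (m + 1) - 1)) by lia.
        rewrite Nat.min_l by lia. rewrite oddR_even, oddR_oddm by lia. ring.
      + rewrite PC, Nat.min_l by lia. rewrite oddR_even. ring. }
  apply Rmult_integral in H0. destruct H0; auto. exfalso. apply (Hv N); auto; lia. Qed.

Lemma step2_gen m0 : (lam < m0 < N)%nat -> (forall m, (m0 < m < N)%nat -> c m = 0) -> c m0 = 0.
Proof. intros Hr IH.
  assert (H := lsum_single _ _ m0 (Key (2 * m0) ltac:(lia)) ltac:(lia)).
  cbv beta in H. rewrite Dv_F in H by lia.
  rewrite PF in H by lia. rewrite !Nat.min_l in H by lia.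
  assert (c m0 * (Mv N x (m0 + 1) * vfun a (2 * m0) x) = 0).
  { rewrite <- H. ring. intros m Hm Hne. unfold Dv.
    destruct (Nat.ltb_spec m lam).
    - rewrite PJ, Nat.min_r by lia. rewrite oddR_even. ring.
    - destruct (Nat.eqb_spec m lam). subst. rewrite step1. ring. destruct (Nat.ltb_spec m N).
      + destruct (Nat.lt_ge_cases m0 m). rewrite IH by lia. ring.
        rewrite PF by lia. rewrite (Nat.min_r (2 * m0) (2 * (m + 1) - 1)) by lia.
        rewrite Nat.min_l by lia. rewrite oddR_even, oddR_oddm by lia. ring.
      + rewrite PC, Nat.min_l by lia. rewrite oddR_even. ring. }
  apply Rmult_integral in H0. destruct H0; auto. exfalso.
  apply Rmult_integral in H0. destruct H0. apply (M_nz (m0 + 1)); auto; lia. apply (Hv m0); auto; lia. Qed.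

Lemma step2 : forall m, (lam < m < N)%nat -> c m = 0.
Proof. assert (forall d m, (N - 1 - d <= m)%nat -> (lam < m < N)%nat -> c m = 0).
  { induction d; intros m Hm Hr.
    - apply step2_gen; auto. intros; lia.
    - apply step2_gen; auto. intros m' Hm'. apply IHd; lia. }
  intros m Hr. apply (H N); auto; lia. Qed.

Lemma step3 : c N = 0.
Proof. assert (H := lsum_single _ _ N (Key (2 * N + 1) ltac:(lia)) ltac:(lia)).
  cbv beta in H. rewrite Dv_C in H by lia. rewrite PC, Nat.min_id, oddR_odd in H.
  assert (c N * Cfun (2 * N + 1) x = 0).
  { rewrite <- H. ring. intros m Hm Hne.
    destruct (Nat.lt_ge_cases m lam).
    - rewrite Dv_J, PJ, Nat.min_r by lia. rewrite oddR_even. ring.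
    - destruct (Nat.eq_dec m lam). subst. rewrite step1. ring.
      rewrite step2 by lia. ring. }
  apply Rmult_integral in H0. destruct H0; auto. exfalso. apply C_nz; auto. Qed.

Lemma step4_gen m0 : (m0 < lam)%nat -> (forall m, (m0 < m < lam)%nat -> c m = 0) -> c m0 = 0.
Proof. intros Hr IH.
  assert (H := lsum_single _ _ m0 (Key (2 * m0 + 1) ltac:(lia)) ltac:(lia)).
  cbv beta in H. rewrite Dv_J in H by lia. rewrite PJ, Nat.min_l, oddR_odd in H by lia.
  assert (c m0 * Jfun (m0 + 1) x = 0).
  { rewrite <- H. ring. intros m Hm Hne.
    destruct (Nat.lt_ge_cases m lam).
    - destruct (Nat.lt_ge_cases m0 m). rewrite IH by lia. ring.
      rewrite Dv_J, PJ, Nat.min_r by lia. rewrite oddR_even. ring.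
    - destruct (Nat.eq_dec m lam). subst. rewrite step1. ring.
      destruct (Nat.eq_dec m N). subst. rewrite step3. ring.
      rewrite step2 by lia. ring. }
  apply Rmult_integral in H0. destruct H0; auto. exfalso. apply (J_nz (m0 + 1)); auto; lia. Qed.

Lemma step4 : forall m, (m < lam)%nat -> c m = 0.
Proof. assert (forall d m, (lam - 1 - d <= m)%nat -> (m < lam)%nat -> c m = 0).
  { induction d; intros m Hm Hr.
    - apply step4_gen; auto. intros; lia.
    - apply step4_gen; auto. intros m' Hm'. apply IHd; lia. }
  intros m Hr. apply (H lam); auto; lia. Qed.

Lemma all_zero : forall m, (m <= N)%nat -> c m = 0.
Proof. intros m Hm. destruct (Nat.lt_ge_cases m lam). apply step4; auto.
destruct (Nat.eq_dec m lam). subst; apply step1. destruct (Nat.eq_dec m N). subst; apply step3.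
apply step2; lia. Qed.
End Indep.

Lemma indep_at N a lam x : (lam + 1 <= N)%nat ->
  (forall i, (1 <= i <= 2 * N + 1)%nat -> x i <> 0) ->
  (forall t, (lam + 1 <= t <= N)%nat -> vfun a (2 * t) x <> 0) ->
  diffs_independent_at (2 * N + 1) (pfamily (2 * N + 1) a lam) x.
Proof. intros Hlam Hx Hv.
  assert (Hd : domain (2 * N + 1) x) by (intros i Hi _; apply Hx; auto).
  destruct (choice (fun m g => (m <= N)%nat -> grad_at (2 * N + 1) (fam N a lam m) x g /\
     forall i, (1 <= i <= 2 * N + 1)%nat -> x i * g i = Dv N a lam x m i)) as [grads Hg].
  { intros m. destruct (Compare_dec.le_lt_dec m N).
    - destruct (grad_fam N a lam x m Hd Hlam l) as [g Hg]. exists g; auto.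
    - exists (fun _ => 0). lia. }
  exists grads. rewrite pfamily_len by auto. split.
  - intros m Hm. rewrite pfamily_nth by lia. apply Hg; lia.
  - intros c Hc m0 Hm0.
    apply (all_zero N a x lam c); auto; try lia.
    intros s Hs.
    transitivity (sumR s (fun i => x i * lsum (N + 1) (fun m => c m * grads m i))).
    + rewrite (sumR_ext s _ (fun i => lsum (N + 1) (fun m => x i * (c m * grads m i))))
        by (intros; apply lsum_scal).
      rewrite (sum_lsum_swap s (N + 1) (fun m i => x i * (c m * grads m i))).
      apply lsum_ext. intros m Hm. symmetry.
      rewrite (sumR_ext s _ (fun i => c m * (x i * grads m i))) by (intros; cbv beta; ring).
      rewrite sumR_scal. f_equal. apply sumR_ext. intros i Hi. apply Hg; lia.
    + apply sumR_zero. intros i Hi. unfold lsum. rewrite Hc by lia. ring.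
Qed.

Definition ebasis (i : nat) : nat -> R := fun j => if (j =? i)%nat then 1 else 0.
Definition cut (a : nat -> R) (s : nat) : nat -> R := fun j => if (j <=? s)%nat then a j else 0.

Lemma lin_ebasis n i x : (1 <= i <= n)%nat -> lin n (ebasis i) x = x i.
Proof. induction n; intros Hi. lia. unfold lin in *. cbn [sumR]. unfold ebasis at 2.
destruct (Nat.eqb_spec (S n) i).
- subst. rewrite sumR_zero. ring. intros j Hj. unfold ebasis.
  replace (j =? S n)%nat with false by (symmetry; apply Nat.eqb_neq; lia). ring.
- rewrite IHn by lia. ring. Qed.

Lemma lin_cut n a s x : (s <= n)%nat -> lin n (cut a s) x = vfun a s x.
Proof. intros. unfold lin. rewrite (sumR_ext n _ (trunc a x s)). rewrite Pre_trunc, Nat.min_r by lia. auto.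
intros i Hi. unfold cut, trunc. destruct (i <=? s)%nat; ring. Qed.

Theorem main_thm (n : nat) (a : nat -> R) (l : nat) :
  Nat.odd n = true ->
  (l + 1 <= n)%nat ->
  (forall i, (1 <= i <= l)%nat -> a i = 0) ->
  a (l + 1)%nat <> 0 ->
  (l + 2 <= n)%nat ->
  let lam := (l / 2)%nat in
  let fs := pfamily n a lam in
  length fs = ((n + 1) / 2)%nat /\
  (forall f g, In f fs -> In g fs -> in_involution n f g) /\
  functionally_independent n fs.
Proof.
  intros Hodd H1 Hz Ha H2 lam fs.
  apply Nat.odd_spec in Hodd. destruct Hodd as [N HN]. subst n.
  assert (Hdm := Nat.div_mod l 2 ltac:(lia)). assert (Hmb := Nat.mod_upper_bound l 2 ltac:(lia)).
  fold lam in Hdm.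
  assert (Hlam : (lam + 1 <= N)%nat) by lia.
  assert (Hv0 : forall x s, (s <= l)%nat -> vfun a s x = 0).
  { intros x s. induction s; intros Hs. reflexivity. rewrite vfun_S, IHs, Hz by lia. ring. }
  split; [| split].
  - unfold fs. rewrite pfamily_len by auto. symmetry. apply div2_eq. lia.
  - apply involution; auto. intros; apply Hv0; lia.
  - set (cs := map ebasis (seq 1 (2 * N + 1)) ++ map (fun t => cut a (2 * t)) (seq (lam + 1) (N - lam))).
    exists (Uset (2 * N + 1) cs). split; [| split].
    + apply open_U.
    + set (A := sumR (2 * N + 1) (fun j => Rabs (a j))).
      assert (HA : 0 <= A) by (apply sum_nonneg; intros; apply Rabs_pos).
      assert (Hpa : 0 < Rabs (a (l + 1)%nat)) by (apply Rabs_pos_lt; auto).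
      set (K := (A + 1) / Rabs (a (l + 1)%nat)).
      assert (HK : 0 <= K) by (unfold K; apply Rle_mult_inv_pos; lra).
      apply (dense_U _ _ (fun i => 1 + (if (i =? l + 1)%nat then K else 0))).
      intros c Hc. unfold cs in Hc. apply in_app_or in Hc. destruct Hc as [Hc | Hc].
      * apply in_map_iff in Hc. destruct Hc as [i [<- Hi]]. apply in_seq in Hi.
        rewrite lin_ebasis by lia. destruct (i =? l + 1)%nat; lra.
      * apply in_map_iff in Hc. destruct Hc as [t [<- Ht]]. apply in_seq in Ht.
        assert (E : lin (2 * N + 1) (cut a (2 * t)) (fun i => 1 + (if (i =? l + 1)%nat then K else 0))
          = sumR (2 * N + 1) (cut a (2 * t)) + K * lin (2 * N + 1) (ebasis (l + 1)) (cut a (2 * t))).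
        { unfold lin. rewrite <- (Rmult_1_l (sumR _ (cut a (2 * t)))). rewrite <- sumR_lin.
          apply sumR_ext; intros j Hj. unfold ebasis. destruct (j =? l + 1)%nat; ring. }
        rewrite E, lin_ebasis by lia.
        assert (Hc1 : cut a (2 * t) (l + 1)%nat = a (l + 1)%nat).
        { unfold cut. replace (l + 1 <=? 2 * t)%nat with true by (symmetry; apply Nat.leb_le; lia). auto. }
        rewrite Hc1.
        assert (Hb : Rabs (sumR (2 * N + 1) (cut a (2 * t))) <= A).
        { apply sum_abs_le. intros j Hj. unfold cut. destruct (j <=? 2 * t)%nat. lra. rewrite Rabs_R0. apply Rabs_pos. }
        assert (HKa : Rabs (K * a (l + 1)%nat) = A + 1).
        { rewrite Rabs_mult, (Rabs_right K) by lra. unfold K. field. lra. }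
        intro Hzero. replace (K * a (l + 1)%nat) with (- sumR (2 * N + 1) (cut a (2 * t))) in HKa by lra.
        rewrite Rabs_Ropp in HKa. lra.
    + intros x Hx. apply indep_at; auto.
      * intros i Hi. rewrite <- (lin_ebasis (2 * N + 1) i x) by auto. apply Hx.
        unfold cs. apply in_or_app. left. apply in_map. apply in_seq. lia.
      * intros t Ht. rewrite <- (lin_cut (2 * N + 1) a (2 * t) x) by lia. apply Hx.
        unfold cs. apply in_or_app. right. apply (in_map (fun t => cut a (2 * t))). apply in_seq. lia.
Qed.

Theorem theorem2p4 (n : nat) (a : nat -> R) (l : nat) :
  Nat.odd n = true ->
  (* l is the smallest integer >= 0 with a_{l+1} <> 0 *)
  (l + 1 <= n)%nat ->
  (forall i, (1 <= i <= l)%nat -> a i = 0) ->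
  a (l + 1)%nat <> 0 ->
  (* the family has (n+1)/2 members (excludes the degenerate case l = n-1) *)
  (l + 2 <= n)%nat ->
  let lam := (l / 2)%nat in
  let fs := pfamily n a lam in
  length fs = ((n + 1) / 2)%nat /\
  (forall f g, In f fs -> In g fs -> in_involution n f g) /\
  functionally_independent n fs.
Proof. exact (main_thm n a l). Qed.
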